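(* Let $\rho:\mathbb{Z}\to[0,\infty)$ be a weight with finite moments, and let $f,g$ be polynomials with $\deg f\le2$, $\deg g\le1$, satisfying $f(x+1)\rho(x+1)-f(x)\rho(x)=g(x)\rho(x)$ for all $x\in\mathbb{Z}$, with $\rho(x)f(x)$ vanishing at the end points of the support of $\rho$. Let $\{p_n\}_{n\ge0}$ be the monic orthogonal polynomials for $\rho$, $\sum_{x}p_mp_n\rho=h_n\delta_{n,m}$, $h_n>0$, let $\mathcal{A}_{\rm l}=g(x)T+f(x)(\Delta+\nabla)$ and let $c_n:=-\sum_{x\in\mathbb{Z}}p_{n+1}(x)(\mathcal{A}_{\rm l}p_n)(x)\rho(x)$. Put $\omega(x)=f(x+1)\rho(x+1)$ and $\langle\phi,\psi\rangle_{s,\omega}=\sum_{x\in\mathbb{Z}}[\phi(x)\psi(x+1)-\phi(x+1)\psi(x)]\omega(x)$, and assume the Pfaffians $\tau_{2n}=\mathrm{Pf}[\langle x^i,x^j\rangle_{s,\omega}]_{i,j=0}^{2n-1}$ are nonzero for all $n\ge1$. Then the polynomials $$Q_{2n+1}(x)=p_{2n+1}(x),\qquad Q_{2n}(x)=\sum_{l=0}^{n}\Big(\prod_{j=l}^{n-1}\frac{c_{2j+1}}{c_{2j}}\Big)p_{2l}(x)$$ (which, when all $c_{2j+1}\neq0$, equals $\big(\prod_{j=0}^{n-1}\frac{c_{2j+1}}{c_{2j}}\big)\sum_{l=0}^{n}\prod_{j=0}^{l-1}\frac{c_{2j}}{c_{2j+1}}p_{2l}(x)$) are monic skew orthogonal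 polynomials for $\langle\cdot,\cdot\rangle_{s,\omega}$, i.e. $\langle Q_{2n},Q_{2m+1}\rangle_{s,\omega}=-\langle Q_{2m+1},Q_{2n}\rangle_{s,\omega}=u_n\delta_{n,m}$ and $\langle Q_{2m},Q_{2n}\rangle_{s,\omega}=\langle Q_{2m+1},Q_{2n+1}\rangle_{s,\omega}=0$, with normalisation $u_n=c_{2n}$.
   Context: $T\phi(x)=\phi(x+1)$, $\Delta\phi(x)=\phi(x+1)-\phi(x)$, $\nabla\phi(x)=\phi(x)-\phi(x-1)$. Skew orthogonal polynomials are monic, $\deg Q_k=k$, and are unique only up to $Q_{2m+1}\mapsto Q_{2m+1}+\gamma_{2m}Q_{2m}$. It is a fact (from the paper) that $\mathcal{A}_{\rm l}p_n=-\frac{c_n}{h_{n+1}}p_{n+1}+\frac{c_{n-1}}{h_{n-1}}p_{n-1}$. *)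

(* Defs.v *)
From HB Require Import structures.
From mathcomp Require Import all_boot all_order all_algebra perm.
From mathcomp Require Import all_classical all_reals all_analysis.
Set Implicit Arguments. Unset Strict Implicit. Unset Printing Implicit Defensive.
Import Order.TTheory GRing.Theory Num.Theory.
Import numFieldNormedType.Exports.
Local Open Scope ring_scope.

Section Defs.
Variable R : realType.

Definition pev (p : {poly R}) (x : int) : R := p.[x%:~R].

Definition zpartial (a : int -> R) (N : nat) : R :=
  \sum_(i < (N.*2).+1) a (i%:Z - N%:Z).
Definition zsum (a : int -> R) : R := limn (zpartial a).

Definition weight_finite_moments (rho : int -> R) : Prop :=
  (forall x, 0 <= rho x) /\
  forall k : nat,
    cvgn (series (fun n : nat => n%:R ^+ k * (rho n%:Z + rho (- n%:Z)))).

Definition Al (f g p : {poly R}) (x : int) : R :=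
  pev g x * pev p (x + 1) + pev f x * (pev p (x + 1) - pev p (x - 1)).

Definition omega (f : {poly R}) (rho : int -> R) (x : int) : R :=
  pev f (x + 1) * rho (x + 1).

Definition skew_s (f : {poly R}) (rho : int -> R) (phi psi : {poly R}) : R :=
  zsum (fun x => (pev phi x * pev psi (x + 1) - pev phi (x + 1) * pev psi x)
                  * omega f rho x).

Lemma pf_lt_even n (i : 'I_n) : (i.*2 < n.*2)%N.
Proof. by rewrite ltn_double. Qed.
Lemma pf_lt_odd n (i : 'I_n) : ((i.*2).+1 < n.*2)%N.
Proof. by rewrite -doubleS leq_double. Qed.

Definition pfaffian (n : nat) (A : 'M[R]_(n.*2)) : R :=
  ((2 ^ n * n`!)%:R)^-1 *
  \sum_(s : 'S_(n.*2))
     (-1) ^+ s * \prod_(i < n) A (s (Ordinal (pf_lt_even i)))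
                                 (s (Ordinal (pf_lt_odd i))).

Definition tau (f : {poly R}) (rho : int -> R) (n : nat) : R :=
  pfaffian (\matrix_(i < n.*2, j < n.*2) skew_s f rho 'X^i 'X^j).

Definition cc (f g : {poly R}) (rho : int -> R) (p : nat -> {poly R}) (n : nat) : R :=
  - zsum (fun x => pev (p n.+1) x * Al f g (p n) x * rho x).

Definition Qpoly (f g : {poly R}) (rho : int -> R) (p : nat -> {poly R}) (k : nat)
  : {poly R} :=
  if odd k then p k
  else \sum_(0 <= l < (k./2).+1)
         (\prod_(l <= j < k./2) (cc f g rho p (j.*2).+1 / cc f g rho p j.*2))
         *: p l.*2.

End Defs.

(* Main.v *)
Require Import Defs.
From HB Require Import structures.
From mathcomp Require Import all_boot all_order all_algebra perm.
From mathcomp Require Import all_classical all_reals all_analysis.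
From mathcomp Require Import zify ring lra.
Set Implicit Arguments. Unset Strict Implicit. Unset Printing Implicit Defensive.
Import Order.TTheory GRing.Theory Num.Theory.
Import numFieldNormedType.Exports.
Local Open Scope ring_scope.
Section Ana.
Variable R : realType.
Implicit Types a b : int -> R.

Lemma zpartialS a N : zpartial a N.+1 = a (- (N.+1)%:Z) + zpartial a N + a (N.+1)%:Z.
Proof.
rewrite /zpartial doubleS big_ord_recl big_ord_recr /= -addrA sub0r; congr (_ + (_ + a _)).
  by apply: eq_bigr => i _; congr (a _); rewrite /bump /=; lia.
by rewrite /bump /=; lia.
Qed.

Lemma zpartial0 a : zpartial a 0 = a 0.
Proof. by rewrite /zpartial big_ord1. Qed.

Lemma zpartialD a b N : zpartial (fun x => a x + b x) N = zpartial a N + zpartial b N.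
Proof. by rewrite /zpartial big_split. Qed.

Lemma zpartialZ c a N : zpartial (fun x => c * a x) N = c * zpartial a N.
Proof. by rewrite /zpartial mulr_sumr. Qed.

Lemma zpartial_le a b N : (forall x, a x <= b x) -> zpartial a N <= zpartial b N.
Proof. by move=> h; rewrite /zpartial; apply: ler_sum => i _. Qed.

Lemma zpartial_nd a : (forall x, 0 <= a x) -> nondecreasing_seq (zpartial a).
Proof.
move=> h; apply/nondecreasing_seqP => n; rewrite zpartialS.
by have := h (- (n.+1)%:Z); have := h (n.+1)%:Z; lra.
Qed.

Lemma cvg_nonneg a : (forall x, 0 <= a x) -> (exists B, forall N, zpartial a N <= B) ->
  cvgn (zpartial a).
Proof.
move=> h [B hB]; apply: nondecreasing_is_cvgn; first exact: zpartial_nd.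
by exists B => _ [n _ <-].
Qed.

Definition summable a := exists B : R, forall N, zpartial (fun x => `|a x|) N <= B.

Lemma summable_cvg a : summable a -> cvgn (zpartial a).
Proof.
move=> [B hB].
have e : zpartial a = zpartial (fun x => a x + `|a x|) - zpartial (fun x => `|a x|).
  apply/funext => N; rewrite !fctE.
  have E := zpartialD a (fun x => `|a x|) N; simpl in E; rewrite E; ring.
have h1 : forall x, 0 <= a x + `|a x|.
  by move=> x; have := ler_norm (- a x); rewrite normrN; lra.
rewrite e; apply: is_cvgB.
  apply: cvg_nonneg => //; exists (B + B) => N; have E := zpartialD a (fun x => `|a x|) N; simpl in E; rewrite E.
  apply: lerD => //; apply: le_trans (hB N); apply: zpartial_le => x; exact: ler_norm.
by apply: cvg_nonneg => //; exists B.
Qed.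

Lemma zsumD a b : summable a -> summable b -> zsum (fun x => a x + b x) = zsum a + zsum b.
Proof.
move=> ha hb; rewrite /zsum.
have -> : zpartial (fun x => a x + b x) = zpartial a + zpartial b.
  by apply/funext => N; rewrite zpartialD.
by apply: limD; apply: summable_cvg.
Qed.

Lemma zsumZ c a : summable a -> zsum (fun x => c * a x) = c * zsum a.
Proof.
move=> ha; rewrite /zsum.
have -> : zpartial (fun x => c * a x) = (fun N => c *: zpartial a N).
  by apply/funext => N; rewrite zpartialZ.
by apply: limZl_tmp; apply: summable_cvg.
Qed.

Lemma summable_le a b : summable a -> (forall x, `|b x| <= `|a x|) -> summable b.
Proof.
move=> [B hB] h; exists B => N; apply: le_trans (hB N); exact: zpartial_le.
Qed.

Lemma summableD a b : summable a -> summable b -> summable (fun x => a x + b x).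
Proof.
move=> [A hA] [B hB]; exists (A + B) => N; apply: le_trans (lerD (hA N) (hB N)).
rewrite -zpartialD; apply: zpartial_le => x; exact: ler_normD.
Qed.

Lemma summableZ c a : summable a -> summable (fun x => c * a x).
Proof.
move=> [B hB]; exists (`|c| * B) => N.
have -> : zpartial (fun x => `|c * a x|) N = `|c| * zpartial (fun x => `|a x|) N.
  by rewrite -zpartialZ; congr zpartial; apply/funext => x; rewrite normrM.
by apply: ler_wpM2l => //.
Qed.

Lemma summable0 : summable (fun _ => 0).
Proof.
exists 0 => N; rewrite /zpartial big1 // => i _; by rewrite normr0.
Qed.

Lemma summable_sum n (F : nat -> int -> R) : (forall i, summable (F i)) ->
  summable (fun x => \sum_(i < n) F i x).
Proof.
move=> h; elim: n => [|n IH].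
  apply: (@summable_le (fun _ => 0)) => [|x]; first exact: summable0.
  by rewrite big_ord0 normr0.
have -> : (fun x => \sum_(i < n.+1) F i x) = (fun x => \sum_(i < n) F i x + F n x).
  by apply/funext => x; rewrite big_ord_recr.
exact: summableD.
Qed.


Lemma zpartial_shift a N :
  zpartial (fun x => a (x + 1)) N = zpartial a N + a (N.+1)%:Z - a (- N%:Z).
Proof.
elim: N => [|N IH].
  by rewrite !zpartial0 add0r oppr0; ring.
rewrite !zpartialS IH.
have -> : (- (N.+1)%:Z + 1 = - N%:Z)%R by lia.
have -> : ((N.+1)%:Z + 1 = (N.+2)%:Z)%R by lia.
ring.
Qed.

Lemma summable_shift a : summable a -> summable (fun x => a (x + 1)).
Proof.
move=> [B hB]; exists B => N; apply: le_trans (hB N.+1).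
rewrite (zpartial_shift (fun x => `|a x|)) zpartialS /=.
have := normr_ge0 (a (- N%:Z)); have := normr_ge0 (a (- (N.+1)%:Z)); lra.
Qed.

Lemma zsum_shift a : summable a -> zsum (fun x => a (x + 1)) = zsum a.
Proof.
move=> ha; have [B hB] := ha.
set S := zpartial (fun x => `|a x|).
have cS : cvgn S by apply: cvg_nonneg => //; exists B.
have cD : ((fun N => a (N.+1)%:Z - a (- N%:Z)) @ \oo --> (0 : R))%classic.
  rewrite -cvg_shiftS /=.
  apply: (@squeeze_cvgr _ _ _ _ (fun N => - (S N.+2 - S N)) (fun N => S N.+2 - S N)).
  - apply: nearW => N; rewrite /S !zpartialS /=.
    have := normr_ge0 (a (- (N.+1)%:Z)); have := normr_ge0 (a (- (N.+2)%:Z)).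
    have := normr_ge0 (a ((N.+1)%:Z)); have := normr_ge0 (a ((N.+2)%:Z)).
    have := ler_norm (a (N.+2)%:Z); have := ler_norm (- a (- (N.+1)%:Z)); rewrite normrN.
    have := ler_norm (- a (N.+2)%:Z); have := ler_norm (a (- (N.+1)%:Z)); rewrite normrN.
    move=> *; apply/andP; split; lra.
  - rewrite -oppr0; apply: cvgN; rewrite -(subrr (limn S)); apply: cvgB => //.
    by move: cS; rewrite -cvg_shiftS -cvg_shiftS.
  - rewrite -(subrr (limn S)); apply: cvgB => //.
    by move: cS; rewrite -cvg_shiftS -cvg_shiftS.
rewrite /zsum.
have -> : zpartial (fun x => a (x + 1)) = zpartial a + (fun N => a (N.+1)%:Z - a (- N%:Z)).
  by apply/funext => N; rewrite zpartial_shift !fctE; ring.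
rewrite limD; first by rewrite (cvg_lim _ cD) ?addr0.
- exact: summable_cvg.
- by apply/cvg_ex; exists 0.
Qed.


Lemma intr_natN (N : nat) : ((- N%:Z)%:~R : R) = - N%:R.
Proof. by rewrite mulrNz -pmulrn. Qed.
Lemma intr_nat' (N : nat) : ((N%:Z)%:~R : R) = N%:R.
Proof. by rewrite -pmulrn. Qed.

Section Mom.
Variable rho : int -> R.
Hypothesis hw : weight_finite_moments rho.

Let mser k := series (fun n : nat => n%:R ^+ k * (rho n%:Z + rho (- n%:Z))).

Lemma zpartial_mom k N :
  zpartial (fun x => `|(x%:~R : R) ^+ k * rho x|) N <= mser k N.+1.
Proof.
have r0 := hw.1.
elim: N => [|N IH].
  rewrite zpartial0 /mser seriesSr /series /= big_geq // add0r normrM normrX.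
  rewrite (ger0_norm (r0 _)) oppr0 /= mulr0z normr0.
  have := r0 0; case: k => [|k]; rewrite ?expr0 ?expr0n /=; lra.
rewrite zpartialS /mser seriesSr -/(mser k N.+1).
rewrite !normrM !normrX !(ger0_norm (r0 _)) intr_natN intr_nat' normrN.
rewrite (ger0_norm (ler0n _ _)).
have := r0 (- (N.+1)%:Z); have := r0 (N.+1)%:Z.
have := exprn_ge0 k (ler0n R N.+1).
move=> *; nra.
Qed.

Lemma summable_mom k : summable (fun x => (x%:~R : R) ^+ k * rho x).
Proof.
have nd : nondecreasing_seq (mser k).
  apply/nondecreasing_seqP => n; rewrite /mser seriesSr lerDl.
  apply: mulr_ge0; first exact: exprn_ge0.
  by apply: addr_ge0; apply: hw.1.
exists (limn (mser k)) => N; apply: le_trans (zpartial_mom k N) _.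
apply: nondecreasing_cvgn_le => //; exact: hw.2.
Qed.

Lemma summable_poly (q : {poly R}) : summable (fun x => pev q x * rho x).
Proof.
have -> : (fun x => pev q x * rho x) =
   (fun x => \sum_(i < size q) (q`_i * ((x%:~R : R) ^+ i * rho x))).
  apply/funext => x; rewrite /pev horner_coef mulr_suml.
  by apply: eq_bigr => i _; rewrite mulrA.
apply: (@summable_sum (size q) (fun (i : nat) x => q`_i * ((x%:~R : R) ^+ i * rho x))) => i.
apply: summableZ; exact: summable_mom.
Qed.

Definition L0 (q : {poly R}) := zsum (fun x => pev q x * rho x).

Lemma L0D q1 q2 : L0 (q1 + q2) = L0 q1 + L0 q2.
Proof.
rewrite /L0 -zsumD; try exact: summable_poly.
by congr zsum; apply/funext => x; rewrite /pev hornerD mulrDl.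
Qed.

Lemma L0Z c q : L0 (c *: q) = c * L0 q.
Proof.
rewrite /L0 -zsumZ; last exact: summable_poly.
by congr zsum; apply/funext => x; rewrite /pev hornerZ mulrA.
Qed.

Lemma L0N q : L0 (- q) = - L0 q.
Proof. by rewrite -scaleN1r L0Z mulN1r. Qed.

Lemma L0B q1 q2 : L0 (q1 - q2) = L0 q1 - L0 q2.
Proof. by rewrite L0D L0N. Qed.

Lemma L0_sum n (c : nat -> R) (F : nat -> {poly R}) :
  L0 (\sum_(i < n) c i *: F i) = \sum_(i < n) c i * L0 (F i).
Proof.
elim: n => [|n IH]; first by rewrite !big_ord0 -(scale0r 0) L0Z mul0r.
by rewrite !big_ord_recr /= L0D IH L0Z.
Qed.

Lemma pev_shift (q : {poly R}) x : pev (q \Po ('X - 1)) (x + 1) = pev q x.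
Proof.
by rewrite /pev horner_comp !hornerE intrD addrK.
Qed.

Lemma L0_shift (q : {poly R}) :
  zsum (fun x => pev q x * rho (x + 1)) = L0 (q \Po ('X - 1)).
Proof.
rewrite /L0 -(zsum_shift (summable_poly (q \Po ('X - 1)))).
by congr zsum; apply/funext => x; rewrite pev_shift.
Qed.

End Mom.
End Ana.

Section Pf.
Variable R : realType.
Variable b : {poly R} -> {poly R} -> R.
Hypothesis bDl : forall x y z, b (x + y) z = b x z + b y z.
Hypothesis bZl : forall c x z, b (c *: x) z = c * b x z.
Hypothesis bDr : forall x y z, b z (x + y) = b z x + b z y.
Hypothesis bZr : forall c x z, b z (c *: x) = c * b z x.
Variable n : nat.
Local Notation N2 := (n.*2).
Implicit Types (s : 'S_N2) (L : 'I_N2) (i : 'I_n) (v : 'I_N2 -> {poly R}).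

Definition ev (i : 'I_n) : 'I_N2 := Ordinal (pf_lt_even i).
Definition od (i : 'I_n) : 'I_N2 := Ordinal (pf_lt_odd i).
Definition pterm (v : 'I_N2 -> {poly R}) (s : 'S_N2) :=
  \prod_(i < n) b (v (s (ev i))) (v (s (od i))).
Definition Fv (v : 'I_N2 -> {poly R}) :=
  \sum_(s : 'S_N2) (-1) ^+ s * pterm v s.

Lemma Fv_dup v a a' : a != a' -> v a = v a' -> Fv v = 0.
Proof.
move=> ha hv; set t := tperm a a'.
have hvt y : v (t y) = v y by rewrite /t; case: tpermP => // ->.
have ht s : pterm v (s * t)%g = pterm v s.
  by apply: eq_bigr => i _; rewrite !permM !hvt.
have hs (s : 'S_N2) : (-1) ^+ (s * t)%g = - (-1) ^+ s :> R.
  by rewrite odd_permM odd_tperm ha signr_addb expr1 mulrN1.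
have e : Fv v = - Fv v.
  rewrite {1}/Fv (reindex_inj (mulIg t)) /= /Fv -sumrN.
  by apply: eq_bigr => s _; rewrite ht hs mulNr.
lra.
Qed.

Lemma ltn_half (t : 'I_N2) : (t./2 < n)%N.
Proof. by rewrite ltn_half_double. Qed.

Definition i0 (s : 'S_N2) (L : 'I_N2) : 'I_n := Ordinal (ltn_half ((s^-1)%g L)).

Lemma which_pair s L i : ((s (ev i) == L) || (s (od i) == L)) = (i == i0 s L).
Proof.
rewrite !(canF_eq (permK s)) -!val_eqE /=.
move: (nat_of_ord ((s^-1)%g L)) => tt.
apply/orP/eqP => /=; lia.
Qed.

Lemma not_both s L i : s (ev i) == L -> s (od i) != L.
Proof.
move/eqP=> e1; apply/negP => /eqP e2; rewrite -e2 in e1.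
move/perm_inj: e1 => /(congr1 val) /=; lia.
Qed.

Definition setv (v : 'I_N2 -> {poly R}) L w := fun y => if y == L then w else v y.

Lemma others s L i v w w' : i != i0 s L ->
  b (setv v L w (s (ev i))) (setv v L w (s (od i))) =
  b (setv v L w' (s (ev i))) (setv v L w' (s (od i))).
Proof.
rewrite -which_pair negb_or => /andP[h1 h2].
by rewrite /setv (negbTE h1) (negbTE h2).
Qed.

Lemma prod_lin (A B C : 'I_n -> R) j c :
  (forall i, i != j -> A i = B i /\ A i = C i) -> A j = c * B j + C j ->
  \prod_(i < n) A i = c * \prod_(i < n) B i + \prod_(i < n) C i.
Proof.
move=> hoff hj; rewrite [LHS](bigD1 j) // [\prod_(i < n) B i](bigD1 j) // [\prod_(i < n) C i](bigD1 j) //.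
have eB : \prod_(i < n | i != j) B i = \prod_(i < n | i != j) A i.
  by apply: eq_bigr => i hi; rewrite (hoff i hi).1.
have eC : \prod_(i < n | i != j) C i = \prod_(i < n | i != j) A i.
  by apply: eq_bigr => i hi; rewrite (hoff i hi).2.
by rewrite eB eC hj /= mulrDl mulrA.
Qed.

Lemma pterm_lin v L s c w1 w2 :
  pterm (setv v L (c *: w1 + w2)) s = c * pterm (setv v L w1) s + pterm (setv v L w2) s.
Proof.
apply: (prod_lin (j := i0 s L)).
  by move=> i hi; split; apply: others.
have := which_pair s L (i0 s L); rewrite eqxx.
rewrite /setv; case: ifP => [h1 _|_ /= h2].
  by rewrite (negbTE (not_both h1)) bDl bZl.
by rewrite h2 bDr bZr.
Qed.

Lemma Fv_lin v L c w1 w2 :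
  Fv (setv v L (c *: w1 + w2)) = c * Fv (setv v L w1) + Fv (setv v L w2).
Proof.
rewrite /Fv mulr_sumr -big_split; apply: eq_bigr => s _.
by rewrite pterm_lin mulrDr mulrCA.
Qed.

Lemma Fv_0 v L : Fv (setv v L 0) = 0.
Proof.
have := Fv_lin v L 1 0 0; rewrite scale1r addr0 mul1r; lra.
Qed.

Lemma Fv_zero_slot v L P : (forall y, y != L -> b P (v y) = 0 /\ b (v y) P = 0) ->
  Fv (setv v L P) = 0.
Proof.
move=> hP; rewrite /Fv; apply: big1 => s _; rewrite /pterm (bigD1 (i0 s L)) //.
have := which_pair s L (i0 s L); rewrite eqxx.
rewrite /setv; case: ifP => [h1 _|h1 /= h2].
  by rewrite (negbTE (not_both h1)) (hP _ (not_both h1)).1 /= mul0r mulr0.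
by rewrite h2 (hP _ (negbT h1)).2 /= mul0r mulr0.
Qed.


Lemma Fv_mono_sum L K (cK : nat -> R) : (K <= L)%N ->
  Fv (setv (fun i : 'I_N2 => 'X^i) L (\sum_(i < K) cK i *: 'X^i)) = 0.
Proof.
elim: K => [|K IH] hK; first by rewrite big_ord0 Fv_0.
rewrite big_ord_recr /= addrC Fv_lin IH ?(ltnW hK) // addr0.
have hK2 : (K < N2)%N by apply: leq_trans hK (ltnW (ltn_ord L)).
rewrite (@Fv_dup _ (Ordinal hK2) L) ?mulr0 //.
  by rewrite -val_eqE /= ltn_eqF.
by rewrite /setv eqxx -val_eqE /= ltn_eqF.
Qed.

Lemma Fv_monomial_zero L (P : {poly R}) : (nat_of_ord L = N2.-1) ->
  (size (P - 'X^L)%R <= L)%N ->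
  (forall j, (j < L)%N -> b P 'X^j = 0 /\ b 'X^j P = 0) ->
  Fv (fun i : 'I_N2 => 'X^i) = 0.
Proof.
move=> hL hsz hP.
set v := fun i : 'I_N2 => 'X^i.
have -> : v = setv v L ('X^L) by apply/funext => y; rewrite /setv; case: eqP => // ->.
have -> : 'X^L = (-1) *: (P - 'X^L) + P by rewrite scaleN1r opprB subrK.
rewrite Fv_lin (@Fv_zero_slot _ _ P); last first.
  move=> y hy; rewrite /v; apply: hP; have := ltn_ord y; have := ltn_ord L.
  move: hy; rewrite -val_eqE /= hL => hy; move: hy => /eqP; lia.
rewrite -{1}(coefK (P - 'X^L)) poly_def Fv_mono_sum //; ring.
Qed.

End Pf.

Section Alg.
Variable R : realType.
Variables (rho : int -> R) (f g : {poly R}) (p : nat -> {poly R}) (h : nat -> R).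
Hypothesis hw : weight_finite_moments rho.
Hypothesis hf : (size f <= 3)%N.
Hypothesis hg : (size g <= 2)%N.
Hypothesis hpear : forall x : int,
  pev f (x + 1) * rho (x + 1) - pev f x * rho x = pev g x * rho x.
Hypothesis hmon : forall n, p n \is monic.
Hypothesis hsize : forall n, size (p n) = n.+1.
Hypothesis horth : forall m n, zsum (fun x => pev (p m) x * pev (p n) x * rho x)
               = if m == n then h n else 0.

Local Notation L0 := (L0 rho).
Implicit Types q phi psi : {poly R}.
Local Notation sk := (skew_s f rho).

Definition sh1 (q : {poly R}) := q \Po ('X + 1).
Definition shm1 (q : {poly R}) := q \Po ('X - 1).
Definition Alp (q : {poly R}) := g * sh1 q + f * (sh1 q - shm1 q).

Lemma pev_sh1 q x : pev (sh1 q) x = pev q (x + 1).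
Proof. by rewrite /pev /sh1 horner_comp !hornerE intrD. Qed.
Lemma pev_shm1 q x : pev (shm1 q) x = pev q (x - 1).
Proof. by rewrite /pev /shm1 horner_comp !hornerE intrB. Qed.
Lemma pevM q1 q2 x : pev (q1 * q2) x = pev q1 x * pev q2 x.
Proof. by rewrite /pev hornerM. Qed.
Lemma pevD q1 q2 x : pev (q1 + q2) x = pev q1 x + pev q2 x.
Proof. by rewrite /pev hornerD. Qed.
Lemma pevB q1 q2 x : pev (q1 - q2) x = pev q1 x - pev q2 x.
Proof. by rewrite /pev hornerD hornerN. Qed.

Lemma pev_Alp q x : pev (Alp q) x = Al f g q x.
Proof. by rewrite /Alp /Al pevD !pevM pevB pev_sh1 pev_shm1. Qed.

Lemma shm1K q : shm1 (sh1 q) = q.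
Proof.
rewrite /shm1 /sh1 -comp_polyA comp_polyD comp_polyX comp_polyC polyC1 subrK.
exact: comp_polyXr.
Qed.
Lemma shm1M q1 q2 : shm1 (q1 * q2) = shm1 q1 * shm1 q2.
Proof. exact: comp_polyM. Qed.

Definition skp (phi psi : {poly R}) := (phi * sh1 psi - sh1 phi * psi) * sh1 f.

Lemma sk_L0 phi psi : sk phi psi = L0 (shm1 (skp phi psi)).
Proof.
rewrite /skew_s -L0_shift //; congr zsum; apply/funext => x.
by rewrite /omega /skp !pevM pevB !pevM !pev_sh1 mulrA.
Qed.

Lemma pearson_L0 q : L0 (shm1 (q * sh1 f)) = L0 (q * (f + g)).
Proof.
rewrite -L0_shift //; rewrite /L0; congr zsum; apply/funext => x.
have e := hpear x.
rewrite !pevM pev_sh1 pevD -mulrA.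
have -> : pev f (x + 1) * rho (x + 1) = pev f x * rho x + pev g x * rho x.
  by rewrite -e; ring.
ring.
Qed.

Lemma sk_Al phi psi : sk phi psi = L0 (phi * Alp psi).
Proof.
rewrite sk_L0 /skp pearson_L0 mulrBl L0B.
rewrite -(pearson_L0 (sh1 phi * psi)) shm1M shm1M shm1K shm1K -L0B.
congr L0; rewrite /Alp; ring.
all: exact: hw.
Qed.


Lemma skDl phi1 phi2 psi : sk (phi1 + phi2) psi = sk phi1 psi + sk phi2 psi.
Proof. by rewrite !sk_Al mulrDl L0D. Qed.
Lemma skZl c phi psi : sk (c *: phi) psi = c * sk phi psi.
Proof. by rewrite !sk_Al -scalerAl L0Z. Qed.

Lemma shm1N q : shm1 (- q) = - shm1 q.
Proof. by rewrite /shm1 -[- q]scaleN1r comp_polyZ scaleN1r. Qed.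

Lemma sk_anti phi psi : sk psi phi = - sk phi psi.
Proof.
rewrite !sk_L0 -L0N //; congr L0; rewrite -shm1N; congr shm1.
by rewrite /skp; ring.
Qed.

Lemma skDr phi psi1 psi2 : sk phi (psi1 + psi2) = sk phi psi1 + sk phi psi2.
Proof. by rewrite sk_anti skDl !(sk_anti _ phi) opprD. Qed.
Lemma skZr c phi psi : sk phi (c *: psi) = c * sk phi psi.
Proof. by rewrite sk_anti skZl (sk_anti _ phi) mulrN. Qed.

Lemma sk_sumL n (b : nat -> R) (F : nat -> {poly R}) psi :
  sk (\sum_(i < n) b i *: F i) psi = \sum_(i < n) b i * sk (F i) psi.
Proof.
elim: n => [|n IH].
  by rewrite !big_ord0 -(scale0r 0) skZl mul0r.
by rewrite !big_ord_recr /= skDl IH skZl.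
Qed.
Lemma sk_sumR n (b : nat -> R) (F : nat -> {poly R}) phi :
  sk phi (\sum_(i < n) b i *: F i) = \sum_(i < n) b i * sk phi (F i).
Proof.
rewrite sk_anti sk_sumL -sumrN; apply: eq_bigr => i _.
by rewrite (sk_anti _ phi) mulrN.
Qed.

Lemma L0_orth m n : L0 (p m * p n) = if m == n then h n else 0.
Proof.
rewrite -horth /L0; congr zsum; apply/funext => x; by rewrite pevM.
Qed.

Lemma lead_p n : (p n)`_n = 1.
Proof.
have := monicP (hmon n); rewrite lead_coefE hsize //.
Qed.

Lemma span_p k q : (size q <= k)%N -> exists b : nat -> R, q = \sum_(i < k) b i *: p i.
Proof.
elim: k q => [|k IH] q hq.
  exists (fun _ => 0); rewrite big_ord0; apply/eqP; rewrite -size_poly_eq0.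
  by move: hq; rewrite leqn0.
have hq' : (size (q - q`_k *: p k)%R <= k)%N.
  apply/leq_sizeP => j hj; rewrite coefB coefZ.
  rewrite leq_eqVlt in hj; case/orP: hj => [/eqP <-|hkj].
    by rewrite lead_p mulr1 subrr.
  have e1 : q`_j = 0 by apply: nth_default; apply: leq_trans hq hkj.
  have e2 : (p k)`_j = 0 by apply: nth_default; rewrite hsize.
  by rewrite e1 e2 mulr0 subr0.
have [b hb] := IH _ hq'.
exists (fun i => if i == k then q`_k else b i).
rewrite big_ord_recr /= eqxx -{1}(subrK (q`_k *: p k) q) hb; congr (_ + _).
by apply: eq_bigr => i _; rewrite ltn_eqF.
Qed.

Lemma L0_p_low k q : (size q <= k)%N -> L0 (p k * q) = 0.
Proof.
move=> hq; have [b ->] := span_p hq.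
rewrite mulr_sumr.
have -> : \sum_(i < k) p k * (b i *: p i) = \sum_(i < k) b i *: (p k * p i).
  by apply: eq_bigr => i _; rewrite scalerAr.
rewrite (L0_sum hw k (fun i => b i) (fun i => p k * p i)).
by apply: big1 => i _; rewrite L0_orth gtn_eqF ?mulr0.
Qed.

Lemma size_sh1 q : size (sh1 q) = size q.
Proof. by rewrite /sh1 size_comp_poly2 // -polyC1 size_XaddC. Qed.
Lemma size_shm1 q : size (shm1 q) = size q.
Proof. by rewrite /shm1 size_comp_poly2 // -polyC1 size_XsubC. Qed.

Lemma size_D q : (size (sh1 q - shm1 q)%R <= (size q).-1)%N.
Proof.
apply/leq_sizeP => j hj; rewrite coefB.
case: (ltngtP j (size q)) => hjq.
- have ej : j = (size q).-1 by move: hj hjq; case: (size q) => //= n; lia.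
  have e1 : (sh1 q)`_j = lead_coef (sh1 q) by rewrite lead_coefE size_sh1 ej.
  have e2 : (shm1 q)`_j = lead_coef (shm1 q) by rewrite lead_coefE size_shm1 ej.
  rewrite e1 e2 /sh1 /shm1 !lead_coef_comp -?polyC1 ?size_XaddC ?size_XsubC //.
  by rewrite lead_coefXaddC lead_coefXsubC subrr.
- by rewrite !nth_default ?subrr // ?size_sh1 ?size_shm1 ltnW.
- by rewrite !nth_default ?subrr // ?size_sh1 ?size_shm1 hjq.
Qed.

Lemma size_Alp q : (0 < size q)%N -> (size (Alp q) <= (size q).+1)%N.
Proof.
move=> hq; rewrite /Alp; apply: leq_trans (size_polyD _ _) _.
rewrite geq_max; apply/andP; split.
  apply: leq_trans (size_polyMleq _ _) _; rewrite size_sh1; lia.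
apply: leq_trans (size_polyMleq _ _) _; have := size_D q; lia.
Qed.

Definition cA := cc f g rho p.

Lemma cA_sk n : cA n = sk (p n) (p n.+1).
Proof.
rewrite /cA /cc (sk_anti (p n.+1)) sk_Al; congr (- _).
rewrite /L0; congr zsum; apply/funext => x; by rewrite pevM pev_Alp.
Qed.

Lemma T_far i j : (j.+2 <= i)%N -> sk (p i) (p j) = 0.
Proof.
move=> hij; rewrite sk_Al L0_p_low //; apply: leq_trans (size_Alp _) _;
  rewrite hsize //.
Qed.

Lemma Tval i j : sk (p i) (p j) =
  (if j == i.+1 then cA i else 0) - (if i == j.+1 then cA j else 0).
Proof.
case: (ltngtP i j) => hij.
- rewrite (ltn_eqF (ltn_trans hij (ltnSn _))) subr0.
  case: eqP => [->|hne]; first by rewrite cA_sk.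
  by rewrite sk_anti T_far ?oppr0 //; lia.
- rewrite (ltn_eqF (ltn_trans hij (ltnSn _))) sub0r.
  case: eqP => [->|hne]; first by rewrite sk_anti cA_sk.
  by rewrite T_far ?oppr0 //; lia.
- subst j; rewrite !(ltn_eqF (ltnSn _)) subrr.
  have := sk_anti (p i) (p i); lra.
Qed.


Lemma tau_Fv n : tau f rho n = ((2 ^ n * n`!)%:R)^-1 * Fv sk (fun i : 'I_(n.*2) => 'X^i).
Proof.
rewrite /tau /pfaffian /Fv; congr (_ * _); apply: eq_bigr => s _; congr (_ * _).
by apply: eq_bigr => i _; rewrite mxE.
Qed.

Hypothesis htau : forall n, (0 < n)%N -> tau f rho n != 0.

Lemma cA_even_nz m : cA (m.*2) != 0.
Proof.
apply/negP => /eqP hc.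
have := htau (ltn0Sn m); rewrite tau_Fv.
have hL : (m.*2.+1 < (m.+1).*2)%N by rewrite doubleS.
rewrite (@Fv_monomial_zero _ _ skDl skZl (fun x y z => skDr z x y) (fun c x z => skZr c z x) _ (Ordinal hL) (p m.*2.+1)) ?mulr0 ?eqxx //=.
- apply/leq_sizeP => j hj; rewrite coefB coefXn.
  rewrite leq_eqVlt in hj; case/orP: hj => [/eqP <-|hkj].
    by rewrite lead_p eqxx subrr.
  rewrite (gtn_eqF hkj) subr0; apply: nth_default; by rewrite hsize.
- move=> j hj.
  have hPX : sk (p m.*2.+1) 'X^j = 0.
    have [bb ->] : exists bb : nat -> R, 'X^j = \sum_(i < m.*2.+1) bb i *: p i.
      by apply: span_p; rewrite size_polyXn.
    rewrite sk_sumR; apply: big1 => i _; rewrite Tval.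
    have -> : ((i : nat) == (m.*2.+1).+1) = false by apply/eqP; have := ltn_ord i; lia.
    case: eqP => [[<-]|_]; first by rewrite hc subrr mulr0.
    by rewrite subrr mulr0.
  by split => //; rewrite sk_anti hPX oppr0.
Qed.

Lemma Qodd m : Qpoly f g rho p (m.*2.+1) = p (m.*2.+1).
Proof. by rewrite /Qpoly /= odd_double. Qed.

Definition alpha n l := \prod_(l <= j < n) (cA (j.*2).+1 / cA j.*2).

Lemma Qeven n : Qpoly f g rho p (n.*2) = \sum_(i < n.+1) alpha n i *: p (i.*2).
Proof. by rewrite /Qpoly odd_double half_double big_mkord. Qed.

Lemma size_sum_le K (F : nat -> {poly R}) B :
  (forall i, (i < K)%N -> (size (F i) <= B)%N) -> (size (\sum_(i < K) F i)%R <= B)%N.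
Proof.
elim: K => [|K IH] hF; first by rewrite big_ord0 size_poly0.
rewrite big_ord_recr /=; apply: leq_trans (size_polyD _ _) _.
rewrite geq_max IH ?hF // => i hi; apply: hF; exact: ltnW.
Qed.

Lemma Qeven_split n : Qpoly f g rho p (n.*2) =
  p (n.*2) + \sum_(i < n) alpha n i *: p (i.*2).
Proof.
rewrite Qeven big_ord_recr /= addrC /alpha big_geq // scale1r; congr (_ + _).
Qed.

Lemma Q_monic_size k : Qpoly f g rho p k \is monic /\ size (Qpoly f g rho p k) = k.+1.
Proof.
have [ok|ek] := boolP (odd k).
  by rewrite /Qpoly ok.
rewrite -[k]odd_double_half (negbTE ek) add0n.
set n := k./2.
have hs : (size (\sum_(i < n) alpha n i *: p (i.*2))%R < size (p n.*2))%N.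
  rewrite hsize ltnS; apply: (@size_sum_le n (fun i => alpha n i *: p i.*2)) => i hi.
  apply: leq_trans (size_scale_leq _ _) _; rewrite hsize; lia.
rewrite Qeven_split; split.
  by rewrite monicE lead_coefDl // (monicP (hmon _)).
by rewrite size_polyDl // hsize.
Qed.

Lemma sum_delta K a (x : nat -> R) :
  \sum_(i < K) (if (i : nat) == a then x i else 0) = if (a < K)%N then x a else 0.
Proof.
elim: K => [|K IH]; first by rewrite big_ord0.
rewrite big_ord_recr /= IH.
case: (ltngtP a K) => hK.
- by rewrite addr0 ltnS (ltnW hK).
- by rewrite ltnNge hK /= addr0.
- by rewrite hK ltnSn add0r.
Qed.

Lemma part_a n m : sk (Qpoly f g rho p n.*2) (Qpoly f g rho p m.*2.+1) =
  if n == m then cA n.*2 else 0.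
Proof.
rewrite Qodd Qeven (sk_sumL _ (fun l => alpha n l) (fun l => p l.*2)).
have -> : \sum_(i < n.+1) alpha n i * sk (p i.*2) (p m.*2.+1) =
  \sum_(i < n.+1) ((if (i : nat) == m then alpha n i * cA (i.*2) else 0)
                  - (if (i : nat) == m.+1 then alpha n i * cA (m.*2.+1) else 0)).
  apply: eq_bigr => i _; rewrite Tval.
  have -> : (m.*2.+1 == (i.*2).+1) = ((i : nat) == m).
    by apply/eqP/eqP; lia.
  have -> : (i.*2 == (m.*2.+1).+1) = ((i : nat) == m.+1).
    by apply/eqP/eqP; lia.
  by case: eqP; case: eqP => _ _; ring.
have d1 := sum_delta n.+1 m (fun i => alpha n i * cA i.*2); cbv beta in d1.
have d2 := sum_delta n.+1 m.+1 (fun i => alpha n i * cA m.*2.+1); cbv beta in d2.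
rewrite sumrB d1 d2 !ltnS.
case: (ltngtP m n) => hK.
- rewrite /alpha (big_ltn hK) /= mulrAC divfK ?cA_even_nz //.
  by rewrite [X in _ - X]mulrC subrr.
- by rewrite subrr.
- by rewrite hK /alpha big_geq // mul1r subr0.
Qed.

Lemma part_c n m : sk (Qpoly f g rho p m.*2) (Qpoly f g rho p n.*2) = 0.
Proof.
rewrite !Qeven (sk_sumL _ (fun l => alpha m l) (fun l => p l.*2)).
apply: big1 => i _; rewrite (sk_sumR _ (fun l => alpha n l) (fun l => p l.*2)).
rewrite big1 ?mulr0 // => j _; rewrite Tval.
have -> : (j.*2 == (i.*2).+1) = false by apply/eqP; lia.
have -> : (i.*2 == (j.*2).+1) = false by apply/eqP; lia.
by rewrite subrr mulr0.
Qed.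

Lemma part_d n m : sk (Qpoly f g rho p m.*2.+1) (Qpoly f g rho p n.*2.+1) = 0.
Proof.
rewrite !Qodd Tval.
have -> : (n.*2.+1 == (m.*2.+1).+1) = false by apply/eqP; lia.
have -> : (m.*2.+1 == (n.*2.+1).+1) = false by apply/eqP; lia.
by rewrite subrr.
Qed.

Lemma part3 : (forall j, cA (2 * j)%N.+1 != 0) -> forall n, Qpoly f g rho p (2 * n)%N =
     (\prod_(0 <= j < n) (cA (2 * j)%N.+1 / cA (2 * j)%N)) *:
       \sum_(0 <= l < n.+1) (\prod_(0 <= j < l) (cA (2 * j)%N / cA (2 * j)%N.+1)) *: p (2 * l)%N.
Proof.
move=> hodd n.
have hev j : cA (2 * j)%N != 0 by rewrite mul2n cA_even_nz.
rewrite mul2n Qeven scaler_sumr -(big_mkord xpredT (fun i => alpha n i *: p i.*2)).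
apply: eq_big_nat => l /andP[_ hl]; rewrite ltnS in hl.
rewrite scalerA mul2n; congr (_ *: _).
rewrite (big_cat_nat (leq0n l) hl) /=.
have e1 : \prod_(l <= j < n) (cA (2 * j)%N.+1 / cA (2 * j)%N) =
          \prod_(l <= j < n) (cA (j.*2).+1 / cA j.*2) by apply: eq_bigr => j _; rewrite mul2n.
have e2 : \prod_(0 <= j < l) (cA (2 * j)%N.+1 / cA (2 * j)%N) *
          \prod_(0 <= j < l) (cA (2 * j)%N / cA (2 * j)%N.+1) = 1.
  rewrite -big_split /=; apply: big1 => j _.
  by rewrite mulrA divfK // divff.
by rewrite mulrAC e2 mul1r e1.
Qed.

End Alg.

Unset Implicit Arguments.
Set Strict Implicit.

Theorem proposition3p9 (R : realType) (rho : int -> R) (f g : {poly R})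
  (p : nat -> {poly R}) (h : nat -> R) :
  weight_finite_moments rho ->
  (size f <= 3)%N -> (size g <= 2)%N ->
  (forall x : int, pev f (x + 1) * rho (x + 1) - pev f x * rho x = pev g x * rho x) ->
  (* f rho vanishes at the (left) end point of the support of rho, if any *)
  (forall a : int, (forall y : int, y < a -> rho y = 0) -> pev f a * rho a = 0) ->
  (forall n, p n \is monic) -> (forall n, size (p n) = n.+1) ->
  (forall n, 0 < h n) ->
  (forall m n, zsum (fun x => pev (p m) x * pev (p n) x * rho x)
               = if m == n then h n else 0) ->
  (forall n, (0 < n)%N -> tau f rho n != 0) ->
  let c := cc f g rho p in
  let Q := Qpoly f g rho p in
  let sk := skew_s f rho in
  (forall k, Q k \is monic /\ size (Q k) = k.+1) /\
  (forall n m, sk (Q (2 * n)%N) (Q (2 * m)%N.+1) = (if n == m then c (2 * n)%N else 0) /\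
               sk (Q (2 * m)%N.+1) (Q (2 * n)%N) = - (if n == m then c (2 * n)%N else 0) /\
               sk (Q (2 * m)%N) (Q (2 * n)%N) = 0 /\
               sk (Q (2 * m)%N.+1) (Q (2 * n)%N.+1) = 0) /\
  ((forall j, c (2 * j)%N.+1 != 0) ->
   forall n, Q (2 * n)%N =
     (\prod_(0 <= j < n) (c (2 * j)%N.+1 / c (2 * j)%N)) *:
       \sum_(0 <= l < n.+1) (\prod_(0 <= j < l) (c (2 * j)%N / c (2 * j)%N.+1)) *: p (2 * l)%N).
Proof.
move=> hw hf hg hpear _ hmon hsize _ horth htau c Q sk.
rewrite {}/c {}/Q {}/sk.
split; [|split].
- by move=> k; apply: Q_monic_size.
- move=> n m; rewrite !mul2n; split; [|split; [|split]].
  + by apply: part_a.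
  + by rewrite sk_anti //; congr (- _); apply: part_a.
  + by apply: part_c.
  + by apply: part_d.
- by move=> hodd; apply: part3.
Qed.
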